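(* Let $U\subset\mathbb{R}^n$ be a bounded, open, connected set and let $(u_1,u_2)$ be a viscosity supersolution of the system (S) in $U$. Assume that $\min_{i=1,2}\inf_{U}u_i$ is attained at a point of $U$, i.e. there exist $i_0\in\{1,2\}$ and $x^*\in U$ with $u_{i_0}(x^* )\le u_i(x)$ for all $x\in U$, $i=1,2$. Then there is a constant $C$ such that $u_1\equiv u_2\equiv C$ in $U$.
   Context: For $\varphi\in C^2$ near $x$, set $\Delta_\infty\varphi(x)=|D\varphi(x)|^{-2}\sum_{k,l=1}^n\varphi_{x_k}\varphi_{x_l}\varphi_{x_kx_l}(x)$ when $D\varphi(x)\neq0$. Define $\Delta_\infty^+\varphi(x)=\Delta_\infty\varphi(x)$ if $D\varphi(x)\ne0$ and $\Delta_\infty^+\varphi(x)=\max\{D^2\varphi(x)v\cdot v: v\in\mathbb{S}^{n-1}\}$ if $D\varphi(x)=0$; define $\Delta_\infty^-\varphi(x)$ in the same way with $\min$ in place of $\max$. The system (S) on an open set $\Omega$ is: $-\Delta_\infty u_1+u_1-u_2=0$ and $-\Delta_\infty u_2+u_2-u_1=0$ in $\Omega$. A pair $(u_1,u_2)$ of upper semicontinuous functions on $\Omega$ is a viscosity subsolution of (S) in $\Omega$ if for each $i\in\{1,2\}$, $j=3-i$, and each $\varphi\in C^2(\Omega)$ such that $u_i-\varphi$ has a local maximum at $x_0\in\Omega$, one has $-\Delta_\infty^+\varphi(x_0)+u_i(x_0)-u_j(x_0)\le0$. A pair of lower semicontinuous functions on $\Omega$ is a viscosity supersolution if for each $i$,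 $j=3-i$, and each $\varphi\in C^2(\Omega)$ such that $u_i-\varphi$ has a local minimum at $x_0\in\Omega$, one has $-\Delta_\infty^-\varphi(x_0)+u_i(x_0)-u_j(x_0)\ge0$. A viscosity solution is a pair that is both a subsolution and a supersolution. *)

(* Defs.v *)
From Stdlib Require Import Reals Lra.
Open Scope R_scope.

(* Points of R^n are represented as functions nat -> R whose coordinates
   of index >= n vanish (predicate [inRn n]). *)
Definition pt := nat -> R.

Definition inRn (n : nat) (x : pt) : Prop := forall k, (n <= k)%nat -> x k = 0.

Fixpoint sumR (n : nat) (f : nat -> R) : R :=
  match n with
  | O => 0
  | S m => sumR m f + f m
  end.

Definition dot (n : nat) (x y : pt) : R := sumR n (fun k => x k * y k).
Definition dist (n : nat) (x y : pt) : R := sqrt (sumR n (fun k => (x k - y k) ^ 2)).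
Definition zero_pt : pt := fun _ => 0.

Definition is_open (n : nat) (U : pt -> Prop) : Prop :=
  (forall x, U x -> inRn n x) /\
  forall x, U x -> exists r, 0 < r /\ forall y, inRn n y -> dist n y x < r -> U y.

Definition bounded_set (n : nat) (U : pt -> Prop) : Prop :=
  exists M, forall x, U x -> dist n x zero_pt <= M.

Definition open_in (n : nat) (U A : pt -> Prop) : Prop :=
  (forall x, A x -> U x) /\
  forall x, A x -> exists r, 0 < r /\ forall y, U y -> dist n y x < r -> A y.

Definition connected (n : nat) (U : pt -> Prop) : Prop :=
  ~ exists A B : pt -> Prop,
      open_in n U A /\ open_in n U B /\
      (forall x, ~ (A x /\ B x)) /\
      (forall x, U x -> A x \/ B x) /\
      (exists a, A a) /\ (exists b, B b).

Definition lsc_on (n : nat) (O : pt -> Prop) (u : pt -> R) : Prop :=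
  forall x, O x -> forall eps, 0 < eps ->
    exists d, 0 < d /\ forall y, O y -> dist n y x < d -> u x - eps < u y.

Definition has_gradient_on (n : nat) (O : pt -> Prop) (f : pt -> R) (Dfun : pt -> pt) : Prop :=
  forall x, O x -> forall eps, 0 < eps ->
    exists d, 0 < d /\ forall y, inRn n y -> dist n y x < d ->
      Rabs (f y - f x - dot n (Dfun x) (fun k => y k - x k)) <= eps * dist n y x.

Definition cont_on (n : nat) (O : pt -> Prop) (f : pt -> R) : Prop :=
  forall x, O x -> forall eps, 0 < eps ->
    exists d, 0 < d /\ forall y, O y -> dist n y x < d -> Rabs (f y - f x) < eps.

(* phi is C^2 on O, with gradient Dphi and Hessian D2phi (D2phi x k l = d_l d_k phi (x)). *)
Definition C2_on (n : nat) (O : pt -> Prop) (phi : pt -> R)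
    (Dphi : pt -> pt) (D2phi : pt -> nat -> nat -> R) : Prop :=
  has_gradient_on n O phi Dphi /\
  (forall k, (k < n)%nat -> has_gradient_on n O (fun x => Dphi x k) (fun x => D2phi x k)) /\
  (forall k l, (k < n)%nat -> (l < n)%nat -> cont_on n O (fun x => D2phi x k l)).

Definition quad (n : nat) (H : nat -> nat -> R) (v : pt) : R :=
  sumR n (fun k => sumR n (fun l => v k * v l * H k l)).

Definition unit_vec (n : nat) (v : pt) : Prop := inRn n v /\ dot n v v = 1.

(* [inf_lap_minus n p H m] : m = Delta_infty^- phi(x) where p = Dphi(x), H = D2phi(x). *)
Definition inf_lap_minus (n : nat) (p : pt) (H : nat -> nat -> R) (m : R) : Prop :=
  (dot n p p <> 0 /\
     m = / (dot n p p) * sumR n (fun k => sumR n (fun l => p k * p l * H k l))) \/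
  (dot n p p = 0 /\
     (exists v, unit_vec n v /\ quad n H v = m) /\
     (forall v, unit_vec n v -> m <= quad n H v)).

Definition local_min_on (n : nat) (O : pt -> Prop) (f : pt -> R) (x0 : pt) : Prop :=
  exists r, 0 < r /\ forall y, O y -> dist n y x0 < r -> f x0 <= f y.

Definition super_component (n : nat) (O : pt -> Prop) (ui uj : pt -> R) : Prop :=
  forall phi Dphi D2phi, C2_on n O phi Dphi D2phi ->
  forall x0, O x0 -> local_min_on n O (fun x => ui x - phi x) x0 ->
  forall m, inf_lap_minus n (Dphi x0) (D2phi x0) m ->
    - m + ui x0 - uj x0 >= 0.

Definition visc_supersolution (n : nat) (O : pt -> Prop) (u1 u2 : pt -> R) : Prop :=
  lsc_on n O u1 /\ lsc_on n O u2 /\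
  super_component n O u1 u2 /\ super_component n O u2 u1.

(* Main.v *)
From Stdlib Require Import Reals Rtopology Lra Lia Psatz IndefiniteDescription Classical.
Require Import Defs.
Open Scope R_scope.

Lemma sumR_ext n f g : (forall k, (k < n)%nat -> f k = g k) -> sumR n f = sumR n g.
Proof. induction n; simpl; intros H; auto. rewrite IHn by (intros; apply H; lia). rewrite (H n) by lia. auto. Qed.

Lemma sumR_plus n f g : sumR n (fun k => f k + g k) = sumR n f + sumR n g.
Proof. induction n; simpl; [ring|]. rewrite IHn; ring. Qed.

Lemma sumR_scal n a f : sumR n (fun k => a * f k) = a * sumR n f.
Proof. induction n; simpl; [ring|]. rewrite IHn; ring. Qed.

Lemma sumR_zero n : sumR n (fun _ => 0) = 0.
Proof. induction n; simpl; [ring|]. rewrite IHn; ring. Qed.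

Lemma sumR_nonneg n f : (forall k, (k < n)%nat -> 0 <= f k) -> 0 <= sumR n f.
Proof. induction n; simpl; intros H; [lra|]. pose proof (H n ltac:(lia)). pose proof (IHn ltac:(intros; apply H; lia)). lra. Qed.

Lemma sumR_le n f g : (forall k, (k < n)%nat -> f k <= g k) -> sumR n f <= sumR n g.
Proof. induction n; simpl; intros H; [lra|]. pose proof (H n ltac:(lia)). pose proof (IHn ltac:(intros; apply H; lia)). lra. Qed.

Lemma sumR_term n f k : (forall k, (k < n)%nat -> 0 <= f k) -> (k < n)%nat -> f k <= sumR n f.
Proof.
  induction n; simpl; intros H Hk; [lia|].
  destruct (Nat.eq_dec k n) as [->|Hne].
  - pose proof (sumR_nonneg n f ltac:(intros; apply H; lia)). lra.
  - pose proof (IHn ltac:(intros; apply H; lia) ltac:(lia)). pose proof (H n ltac:(lia)). lra.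
Qed.

Definition delta (k l : nat) : R := if Nat.eq_dec k l then 1 else 0.

Lemma sumR_delta n f k : (k < n)%nat -> sumR n (fun l => f l * delta k l) = f k.
Proof.
  induction n; simpl; intros Hk; [lia|]. unfold delta at 2.
  destruct (Nat.eq_dec k n) as [->|Hne].
  - rewrite (sumR_ext n _ (fun _ => 0)). rewrite sumR_zero. ring.
    intros l Hl. unfold delta. destruct (Nat.eq_dec n l); [lia|ring].
  - rewrite IHn by lia. ring.
Qed.

Lemma sumR_delta' n f k : (k < n)%nat -> sumR n (fun l => delta k l * f l) = f k.
Proof. intros. rewrite <- (sumR_delta n f k H). apply sumR_ext; intros; cbv beta; ring. Qed.

Definition nrm n (a : pt) := sqrt (dot n a a).

Lemma dot_nonneg n a : 0 <= dot n a a.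
Proof. unfold dot. apply sumR_nonneg. intros. nra. Qed.

Lemma dot_sym n a b : dot n a b = dot n b a.
Proof. unfold dot. apply sumR_ext; intros; cbv beta; ring. Qed.

Lemma quad_expand n a b t : sumR n (fun k => (t * a k + b k) * (t * a k + b k)) =
  t*t * dot n a a + 2 * t * dot n a b + dot n b b.
Proof. unfold dot. induction n; simpl; [ring|]. rewrite IHn. ring. Qed.

Lemma dot_zero_all n a : dot n a a = 0 -> forall k, (k < n)%nat -> a k = 0.
Proof.
  intros H k Hk. pose proof (sumR_term n (fun k => a k * a k) k ltac:(intros; nra) Hk).
  unfold dot in H. nra.
Qed.

Lemma CS2 n a b : dot n a b * dot n a b <= dot n a a * dot n b b.
Proof.
  pose proof (dot_nonneg n a). pose proof (dot_nonneg n b).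
  destruct (Req_dec (dot n a a) 0) as [Hz|Hz].
  - assert (dot n a b = 0). { unfold dot. rewrite (sumR_ext _ _ (fun _ => 0)). apply sumR_zero.
      intros. rewrite (dot_zero_all n a Hz k H1). ring. }
    rewrite H1, Hz. lra.
  - set (t := - dot n a b / dot n a a).
    pose proof (sumR_nonneg n (fun k => (t * a k + b k) * (t * a k + b k)) ltac:(intros k _; apply Rle_0_sqr)).
    rewrite quad_expand in H1. unfold t in H1.
    assert (0 < dot n a a) by lra.
    assert (Heq: - dot n a b / dot n a a * (- dot n a b / dot n a a) * dot n a a +
      2 * (- dot n a b / dot n a a) * dot n a b + dot n b b =
      dot n b b - dot n a b * dot n a b / dot n a a) by (field; lra).
    rewrite Heq in H1.
    apply Rmult_le_reg_r with (/ dot n a a). apply Rinv_0_lt_compat; lra.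
    replace (dot n a a * dot n b b * / dot n a a) with (dot n b b) by (field; lra).
    unfold Rdiv in H1. lra.
Qed.

Lemma CS n a b : Rabs (dot n a b) <= nrm n a * nrm n b.
Proof.
  unfold nrm. rewrite <- sqrt_mult by apply dot_nonneg.
  rewrite <- sqrt_Rsqr_abs. apply sqrt_le_1_alt. unfold Rsqr. apply CS2.
Qed.

Lemma nrm_nonneg n a : 0 <= nrm n a.
Proof. apply sqrt_pos. Qed.

Lemma dist_nrm n y x : dist n y x = nrm n (fun k => y k - x k).
Proof. unfold dist, nrm, dot. f_equal. apply sumR_ext. intros; cbv beta; ring. Qed.

Lemma dist_nonneg n y x : 0 <= dist n y x.
Proof. apply sqrt_pos. Qed.

Lemma dist_sq n y x : dist n y x * dist n y x = sumR n (fun k => (y k - x k)^2).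
Proof. unfold dist. apply sqrt_sqrt. apply sumR_nonneg. intros; apply pow2_ge_0. Qed.

Lemma dist_sym n y x : dist n y x = dist n x y.
Proof. unfold dist. f_equal. apply sumR_ext. intros; cbv beta; ring. Qed.

Lemma coord_le_dist n y x k : (k < n)%nat -> Rabs (y k - x k) <= dist n y x.
Proof.
  intros Hk. unfold dist. rewrite <- sqrt_Rsqr_abs. apply sqrt_le_1_alt. unfold Rsqr.
  assert (H := sumR_term n (fun j => (y j - x j)^2) k (fun j _ => pow2_ge_0 _) Hk). cbv beta in H.
  replace ((y k - x k) * (y k - x k)) with ((y k - x k)^2) by ring. exact H.
Qed.

Lemma dot_plus_l n a b v : dot n (fun k => a k + b k) v = dot n a v + dot n b v.
Proof. unfold dot. rewrite <- sumR_plus. apply sumR_ext; intros; cbv beta; ring. Qed.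

Lemma dot_scal_l n c a v : dot n (fun k => c * a k) v = c * dot n a v.
Proof. unfold dot. rewrite <- sumR_scal. apply sumR_ext; intros; cbv beta; ring. Qed.

Lemma dot_zero_l n v : dot n (fun _ => 0) v = 0.
Proof. unfold dot. transitivity (sumR n (fun _ => 0)). apply sumR_ext; intros; cbv beta; ring. apply sumR_zero. Qed.

Lemma dot_delta_l n k v : (k < n)%nat -> dot n (fun l => delta k l) v = v k.
Proof. intros. unfold dot. apply sumR_delta'. auto. Qed.

Lemma dot_ext n a b v : (forall k, (k < n)%nat -> a k = b k) -> dot n a v = dot n b v.
Proof. intros H. unfold dot. apply sumR_ext. intros. rewrite H; auto. Qed.

Lemma nrm_plus n a b : nrm n (fun k => a k + b k) <= nrm n a + nrm n b.
Proof.
  unfold nrm. pose proof (dot_nonneg n a). pose proof (dot_nonneg n b).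
  apply Rsqr_incr_0_var. 2: { pose proof (sqrt_pos (dot n a a)). pose proof (sqrt_pos (dot n b b)). lra. }
  unfold Rsqr. rewrite sqrt_sqrt by apply dot_nonneg.
  assert (E: dot n (fun k => a k + b k) (fun k => a k + b k) = dot n a a + 2 * dot n a b + dot n b b).
  { unfold dot. clear. induction n; simpl; [ring|]. rewrite IHn. ring. }
  rewrite E.
  pose proof (CS n a b). unfold nrm in H1. pose proof (Rle_abs (dot n a b)).
  pose proof (sqrt_sqrt _ H). pose proof (sqrt_sqrt _ H0). nra.
Qed.

Lemma dist_tri n x y z : dist n x z <= dist n x y + dist n y z.
Proof.
  rewrite !dist_nrm. 
  replace (nrm n (fun k => x k - z k)) with (nrm n (fun k => (x k - y k) + (y k - z k))).
  apply nrm_plus. unfold nrm, dot. f_equal. apply sumR_ext; intros; cbv beta; ring.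
Qed.

Definition HGp n (f : pt -> R) (D : pt) (x : pt) : Prop :=
  forall eps, 0 < eps -> exists d, 0 < d /\ forall y, inRn n y -> dist n y x < d ->
    Rabs (f y - f x - dot n D (fun k => y k - x k)) <= eps * dist n y x.

Lemma HG_ext n f D D' x : HGp n f D x -> (forall k, (k < n)%nat -> D k = D' k) -> HGp n f D' x.
Proof.
  intros H E eps He. destruct (H eps He) as [d [Hd Hy]]. exists d; split; auto.
  intros y Hy1 Hy2. rewrite <- (dot_ext n D D'); auto.
Qed.

Lemma HG_fext n f g D x : (forall y, f y = g y) -> HGp n f D x -> HGp n g D x.
Proof.
  intros E H eps He. destruct (H eps He) as [d [Hd Hy]]. exists d; split; auto.
  intros y Hy1 Hy2. rewrite <- !E. auto.
Qed.

Lemma HG_const n c x : HGp n (fun _ => c) (fun _ => 0) x.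
Proof.
  intros eps He. exists 1; split; [lra|]. intros y _ _. rewrite dot_zero_l.
  replace (c - c - 0) with 0 by ring. rewrite Rabs_R0.
  pose proof (dist_nonneg n y x). nra.
Qed.

Lemma HG_coord n k a x : (k < n)%nat -> HGp n (fun z => z k - a) (fun l => delta k l) x.
Proof.
  intros Hk eps He. exists 1; split; [lra|]. intros y _ _. rewrite dot_delta_l by auto.
  replace (y k - a - (x k - a) - (y k - x k)) with 0 by ring. rewrite Rabs_R0.
  pose proof (dist_nonneg n y x). nra.
Qed.

Lemma dot_v_bound n D y x : Rabs (dot n D (fun k => y k - x k)) <= nrm n D * dist n y x.
Proof. rewrite dist_nrm. apply CS. Qed.

Lemma HG_bound n f D x : HGp n f D x -> exists d, 0 < d /\ forall y, inRn n y -> dist n y x < d ->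
  Rabs (f y - f x) <= (nrm n D + 1) * dist n y x.
Proof.
  intros H. destruct (H 1 ltac:(lra)) as [d [Hd Hy]]. exists d; split; auto.
  intros y H1 H2. specialize (Hy y H1 H2). pose proof (dot_v_bound n D y x).
  pose proof (Rabs_triang (f y - f x - dot n D (fun k => y k - x k)) (dot n D (fun k => y k - x k))) as T.
  replace (f y - f x - dot n D (fun k => y k - x k) + dot n D (fun k => y k - x k)) with (f y - f x) in T by ring.
  lra.
Qed.

Lemma HG_cont n f D x : HGp n f D x -> forall e, 0 < e -> exists d, 0 < d /\ forall y, inRn n y -> dist n y x < d ->
  Rabs (f y - f x) < e.
Proof.
  intros H e He. destruct (HG_bound n f D x H) as [d [Hd Hy]].
  pose proof (nrm_nonneg n D).
  exists (Rmin d (e / (nrm n D + 2))). split.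
  { apply Rmin_pos; auto. apply Rdiv_lt_0_compat; lra. }
  intros y H1 H2. assert (dist n y x < d) by (pose proof (Rmin_l d (e / (nrm n D + 2))); lra).
  specialize (Hy y H1 H3). assert (dist n y x < e / (nrm n D + 2)) by (pose proof (Rmin_r d (e / (nrm n D + 2))); lra).
  pose proof (dist_nonneg n y x).
  assert ((nrm n D + 1) * dist n y x <= (nrm n D + 2) * dist n y x) by nra.
  assert ((nrm n D + 2) * dist n y x < e).
  { apply Rmult_lt_compat_l with (r := nrm n D + 2) in H4; [|lra].
    replace ((nrm n D + 2) * (e / (nrm n D + 2))) with e in H4 by (field; lra). lra. }
  lra.
Qed.

Lemma HG_plus n f g Df Dg x : HGp n f Df x -> HGp n g Dg x ->
  HGp n (fun z => f z + g z) (fun k => Df k + Dg k) x.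
Proof.
  intros Hf Hg eps He. destruct (Hf (eps/2) ltac:(lra)) as [d1 [Hd1 H1]].
  destruct (Hg (eps/2) ltac:(lra)) as [d2 [Hd2 H2]].
  exists (Rmin d1 d2); split. apply Rmin_pos; auto.
  intros y Hy Hdy. pose proof (Rmin_l d1 d2). pose proof (Rmin_r d1 d2).
  specialize (H1 y Hy ltac:(lra)). specialize (H2 y Hy ltac:(lra)).
  rewrite dot_plus_l.
  replace (f y + g y - (f x + g x) - (dot n Df (fun k => y k - x k) + dot n Dg (fun k => y k - x k)))
    with ((f y - f x - dot n Df (fun k => y k - x k)) + (g y - g x - dot n Dg (fun k => y k - x k))) by ring.
  eapply Rle_trans. apply Rabs_triang. lra.
Qed.

Lemma HG_scal n c f D x : HGp n f D x -> HGp n (fun z => c * f z) (fun k => c * D k) x.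
Proof.
  intros Hf eps He. destruct (Hf (eps/(Rabs c + 1))) as [d [Hd H1]].
  { apply Rdiv_lt_0_compat; [lra|]. pose proof (Rabs_pos c); lra. }
  exists d; split; auto. intros y Hy Hdy. specialize (H1 y Hy Hdy).
  rewrite dot_scal_l.
  replace (c * f y - c * f x - c * dot n D (fun k => y k - x k)) with (c * (f y - f x - dot n D (fun k => y k - x k))) by ring.
  rewrite Rabs_mult. pose proof (Rabs_pos c). pose proof (dist_nonneg n y x).
  apply Rle_trans with (Rabs c * (eps / (Rabs c + 1) * dist n y x)). apply Rmult_le_compat_l; auto.
  replace (Rabs c * (eps / (Rabs c + 1) * dist n y x)) with ((Rabs c / (Rabs c + 1)) * (eps * dist n y x)) by (field; lra).
  assert (Rabs c / (Rabs c + 1) <= 1). { apply Rmult_le_reg_r with (Rabs c + 1); [lra|]. field_simplify; lra. }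
  pose proof (Rmult_le_pos _ _ (Rlt_le _ _ He) H0).
  assert (0 <= Rabs c / (Rabs c + 1)) by (unfold Rdiv; apply Rmult_le_pos; [lra| left; apply Rinv_0_lt_compat; lra]). nra.
Qed.

Lemma HG_mult n f g Df Dg x : HGp n f Df x -> HGp n g Dg x ->
  HGp n (fun z => f z * g z) (fun k => f x * Dg k + g x * Df k) x.
Proof.
  intros Hf Hg eps He.
  set (A := Rabs (f x)). set (B := Rabs (g x)). set (Lg := nrm n Dg + 1).
  assert (HA : 0 <= A) by apply Rabs_pos. assert (HB : 0 <= B) by apply Rabs_pos.
  assert (HL : 1 <= Lg) by (pose proof (nrm_nonneg n Dg); unfold Lg; lra).
  destruct (Hf (eps/(3*(B+1)))) as [d1 [Hd1 H1]]. { apply Rdiv_lt_0_compat; lra. }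
  destruct (Hg (eps/(3*(A+1)))) as [d2 [Hd2 H2]]. { apply Rdiv_lt_0_compat; lra. }
  destruct (HG_bound n g Dg x Hg) as [d3 [Hd3 H3]].
  destruct (HG_cont n f Df x Hf (eps/(3*Lg))) as [d4 [Hd4 H4]]. { apply Rdiv_lt_0_compat; lra. }
  exists (Rmin (Rmin d1 d2) (Rmin d3 d4)). split. { repeat apply Rmin_pos; auto. }
  intros y Hy Hdy.
  pose proof (Rmin_l (Rmin d1 d2) (Rmin d3 d4)). pose proof (Rmin_r (Rmin d1 d2) (Rmin d3 d4)).
  pose proof (Rmin_l d1 d2). pose proof (Rmin_r d1 d2). pose proof (Rmin_l d3 d4). pose proof (Rmin_r d3 d4).
  specialize (H1 y Hy ltac:(lra)). specialize (H2 y Hy ltac:(lra)).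
  specialize (H3 y Hy ltac:(lra)). specialize (H4 y Hy ltac:(lra)).
  set (v := fun k => y k - x k) in *.
  set (d := dist n y x) in *. assert (Hd0 : 0 <= d) by apply dist_nonneg.
  rewrite dot_plus_l, !dot_scal_l.
  set (Rf := f y - f x - dot n Df v) in *. set (Rg := g y - g x - dot n Dg v) in *.
  replace (f y * g y - f x * g x - (f x * dot n Dg v + g x * dot n Df v))
    with (f x * Rg + g x * Rf + (f y - f x) * (g y - g x)) by (unfold Rf, Rg; ring).
  assert (E1 : Rabs (f x * Rg) <= eps / 3 * d).
  { rewrite Rabs_mult. fold A. apply Rle_trans with (A * (eps / (3 * (A + 1)) * d)).
    apply Rmult_le_compat_l; auto.
    replace (A * (eps / (3 * (A + 1)) * d)) with ((A/(A+1)) * (eps/3 * d)) by (field; lra).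
    assert (A / (A+1) <= 1). { apply Rmult_le_reg_r with (A + 1); [lra|]. field_simplify; lra. }
    assert (0 <= eps/3*d) by (apply Rmult_le_pos; lra). nra. }
  assert (E2 : Rabs (g x * Rf) <= eps / 3 * d).
  { rewrite Rabs_mult. fold B. apply Rle_trans with (B * (eps / (3 * (B + 1)) * d)).
    apply Rmult_le_compat_l; auto.
    replace (B * (eps / (3 * (B + 1)) * d)) with ((B/(B+1)) * (eps/3 * d)) by (field; lra).
    assert (B / (B+1) <= 1). { apply Rmult_le_reg_r with (B + 1); [lra|]. field_simplify; lra. }
    assert (0 <= eps/3*d) by (apply Rmult_le_pos; lra). nra. }
  assert (E3 : Rabs ((f y - f x) * (g y - g x)) <= eps / 3 * d).
  { rewrite Rabs_mult. fold Lg in H3.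
    apply Rle_trans with ((eps / (3 * Lg)) * (Lg * d)).
    apply Rmult_le_compat; try apply Rabs_pos; lra.
    right. field. lra. }
  eapply Rle_trans. apply Rabs_triang. eapply Rle_trans. apply Rplus_le_compat_r. apply Rabs_triang. lra.
Qed.

Lemma deriv_bound g s l : derivable_pt_lim g s l -> forall eps, 0 < eps ->
  exists del, 0 < del /\ forall h, Rabs h < del -> Rabs (g (s + h) - g s - l * h) <= eps * Rabs h.
Proof.
  intros H eps He. destruct (H eps He) as [del Hdel]. exists del; split; [apply cond_pos|].
  intros h Hh. destruct (Req_dec h 0) as [->|Hn].
  - rewrite Rplus_0_r. replace (g s - g s - l * 0) with 0 by ring. rewrite Rabs_R0. lra.
  - specialize (Hdel h Hn Hh).
    replace (g (s + h) - g s - l * h) with (((g (s + h) - g s) / h - l) * h) by (field; auto).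
    rewrite Rabs_mult. pose proof (Rabs_pos h). apply Rmult_le_compat_r; lra.
Qed.

Lemma HG_comp n g g' f D x : derivable_pt_lim g (f x) g' -> HGp n f D x ->
  HGp n (fun z => g (f z)) (fun k => g' * D k) x.
Proof.
  intros Hg Hf eps He.
  set (Lf := nrm n D + 1). assert (HL : 1 <= Lf) by (pose proof (nrm_nonneg n D); unfold Lf; lra).
  set (G := Rabs g'). assert (HG0 : 0 <= G) by apply Rabs_pos.
  destruct (deriv_bound g (f x) g' Hg (eps/(2*Lf))) as [del [Hdel H1]]. { apply Rdiv_lt_0_compat; lra. }
  destruct (HG_bound n f D x Hf) as [d2 [Hd2 H2]].
  destruct (HG_cont n f D x Hf del Hdel) as [d3 [Hd3 H3]].
  destruct (Hf (eps/(2*(G+1)))) as [d4 [Hd4 H4]]. { apply Rdiv_lt_0_compat; lra. }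
  exists (Rmin (Rmin d2 d3) d4). split. { repeat apply Rmin_pos; auto. }
  intros y Hy Hdy.
  pose proof (Rmin_l (Rmin d2 d3) d4). pose proof (Rmin_r (Rmin d2 d3) d4).
  pose proof (Rmin_l d2 d3). pose proof (Rmin_r d2 d3).
  specialize (H2 y Hy ltac:(lra)). specialize (H3 y Hy ltac:(lra)). specialize (H4 y Hy ltac:(lra)).
  set (v := fun k => y k - x k) in *.
  set (d := dist n y x) in *. assert (Hd0 : 0 <= d) by apply dist_nonneg.
  rewrite dot_scal_l.
  specialize (H1 (f y - f x) H3). replace (f x + (f y - f x)) with (f y) in H1 by ring.
  replace (g (f y) - g (f x) - g' * dot n D v) with
    ((g (f y) - g (f x) - g' * (f y - f x)) + g' * (f y - f x - dot n D v)) by ring.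
  assert (E1 : Rabs (g (f y) - g (f x) - g' * (f y - f x)) <= eps / 2 * d).
  { eapply Rle_trans. apply H1. fold Lf in H2.
    apply Rle_trans with (eps / (2 * Lf) * (Lf * d)).
    apply Rmult_le_compat_l; auto. left; apply Rdiv_lt_0_compat; lra.
    right; field; lra. }
  assert (E2 : Rabs (g' * (f y - f x - dot n D v)) <= eps / 2 * d).
  { rewrite Rabs_mult. fold G. apply Rle_trans with (G * (eps / (2 * (G + 1)) * d)).
    apply Rmult_le_compat_l; auto.
    replace (G * (eps / (2 * (G + 1)) * d)) with ((G/(G+1)) * (eps/2 * d)) by (field; lra).
    assert (G / (G+1) <= 1). { apply Rmult_le_reg_r with (G + 1); [lra|]. field_simplify; lra. }
    assert (0 <= eps/2*d) by (apply Rmult_le_pos; lra). nra. }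
  eapply Rle_trans. apply Rabs_triang. lra.
Qed.

Definition qf n (c : pt) (z : pt) : R := sumR n (fun k => (z k - c k)^2).

Lemma qf_dist n c z : dist n z c = sqrt (qf n c z).
Proof. reflexivity. Qed.

Lemma qf_nonneg n c z : 0 <= qf n c z.
Proof. apply sumR_nonneg. intros. apply pow2_ge_0. Qed.

Lemma qf_sq n c z : qf n c z = dist n z c * dist n z c.
Proof. rewrite qf_dist. rewrite sqrt_sqrt; auto. apply qf_nonneg. Qed.

Lemma HG_q n c x : HGp n (qf n c) (fun k => 2 * (x k - c k)) x.
Proof.
  intros eps He. exists eps; split; auto. intros y _ Hd.
  assert (E: qf n c y - qf n c x - dot n (fun k => 2 * (x k - c k)) (fun k => y k - x k) = dist n y x * dist n y x).
  { rewrite dist_sq. unfold qf, dot. clear. induction n; cbn [sumR]; [ring|]. rewrite <- IHn. ring. }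
  rewrite E. pose proof (dist_nonneg n y x). rewrite Rabs_right by nra. nra.
Qed.

Definition Gf (c a : R) (N : nat) (s : R) : R := a * (c - s)^N.

Lemma dGf c a N s : derivable_pt_lim (Gf c a N) s (Gf c (-(a * INR N)) (pred N) s).
Proof.
  assert (H1 : derivable_pt_lim (fct_cte c - id)%F s (0 - 1)).
  { apply derivable_pt_lim_minus. apply derivable_pt_lim_const. apply derivable_pt_lim_id. }
  pose proof (derivable_pt_lim_comp _ (fun y => y^N) s _ _ H1 (derivable_pt_lim_pow _ N)) as H2.
  pose proof (derivable_pt_lim_scal _ a s _ H2) as H3.
  replace (Gf c (-(a * INR N)) (pred N) s) with (a * (INR N * ((fct_cte c - id)%F s) ^ pred N * (0 - 1))).
  exact H3.
  unfold Gf, fct_cte, minus_fct, id. ring.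
Qed.

Definition SM n (f : pt -> R) := forall x, exists D, HGp n f D x.

Lemma SM_const n c : SM n (fun _ => c).
Proof. intros x. eexists. apply HG_const. Qed.
Lemma SM_coord n k a : (k < n)%nat -> SM n (fun z => z k - a).
Proof. intros Hk x. eexists. apply HG_coord; auto. Qed.
Lemma SM_plus n f g : SM n f -> SM n g -> SM n (fun z => f z + g z).
Proof. intros Hf Hg x. destruct (Hf x), (Hg x). eexists. apply HG_plus; eauto. Qed.
Lemma SM_mult n f g : SM n f -> SM n g -> SM n (fun z => f z * g z).
Proof. intros Hf Hg x. destruct (Hf x), (Hg x). eexists. apply HG_mult; eauto. Qed.
Lemma SM_comp n g f : (forall s, exists l, derivable_pt_lim g s l) -> SM n f -> SM n (fun z => g (f z)).
Proof. intros Hg Hf x. destruct (Hf x). destruct (Hg (f x)). eexists. apply HG_comp; eauto. Qed.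
Lemma SM_q n c : SM n (qf n c).
Proof. intros x. eexists. apply HG_q. Qed.

Lemma SM_cont n O f : (forall x, O x -> inRn n x) -> SM n f -> cont_on n O f.
Proof.
  intros HO Hf x Ox eps He. destruct (Hf x) as [D HD].
  destruct (HG_cont n f D x HD eps He) as [d [Hd H]]. exists d; split; auto.
Qed.

Lemma SM_Gf c a N : forall s, exists l, derivable_pt_lim (Gf c a N) s l.
Proof. intros s. eexists. apply dGf. Qed.

Section TF.
Variable n : nat.
Variable y0 : pt.
Variable c a : R.
Variable M : nat.

Definition a1 := -(a * INR (S (S M))).
Definition a2 := -(a1 * INR (S M)).
Definition phi (x : pt) : R := Gf c a (S (S M)) (qf n y0 x).
Definition Dphi (x : pt) : pt := fun k => Gf c a1 (S M) (qf n y0 x) * (2 * (x k - y0 k)).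
Definition D2phi (x : pt) : nat -> nat -> R := fun k l =>
  Gf c a1 (S M) (qf n y0 x) * (2 * delta k l) +
  (2 * (x k - y0 k)) * (Gf c a2 M (qf n y0 x) * (2 * (x l - y0 l))).

Lemma phi_C2 O : (forall x, O x -> inRn n x) -> C2_on n O phi Dphi D2phi.
Proof.
  intros HO. split; [|split].
  - intros x _. apply (HG_comp n (Gf c a (S (S M))) _ (qf n y0) _ x). apply dGf. apply HG_q.
  - intros k Hk x _.
    apply (HG_mult n (fun z => Gf c a1 (S M) (qf n y0 z)) (fun z => 2 * (z k - y0 k))).
    + apply (HG_comp n (Gf c a1 (S M)) _ (qf n y0) _ x). apply dGf. apply HG_q.
    + apply (HG_ext n _ (fun l => 2 * delta k l)). apply (HG_scal n 2 (fun z => z k - y0 k)). apply HG_coord; auto.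
      intros; auto.
  - intros k l Hk Hl. apply SM_cont; auto. unfold D2phi.
    apply SM_plus. apply SM_mult. apply SM_comp. apply SM_Gf. apply SM_q. apply SM_const.
    apply SM_mult. apply SM_mult. apply SM_const. apply SM_coord; auto.
    apply SM_mult. apply SM_comp. apply SM_Gf. apply SM_q.
    apply SM_mult. apply SM_const. apply SM_coord; auto.
Qed.

Lemma lap_calc p :
  let s := qf n y0 p in
  let A := Gf c a1 (S M) s in
  let B := Gf c a2 M s in
  dot n (Dphi p) (Dphi p) = 4 * A * A * s /\
  sumR n (fun k => sumR n (fun l => Dphi p k * Dphi p l * D2phi p k l)) = 4 * A * A * s * (2 * A + 4 * B * s).
Proof.
  intros s A B. set (t := fun k => p k - y0 k).
  assert (Hs : s = sumR n (fun k => t k * t k)).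
  { unfold s, qf, t. apply sumR_ext. intros; cbv beta; ring. }
  split.
  - unfold dot, Dphi. fold s A. rewrite Hs, <- sumR_scal. apply sumR_ext. intros; unfold t; cbv beta; ring.
  - unfold Dphi, D2phi. fold s A B.
    transitivity (sumR n (fun k => (t k * t k) * (8 * A * A * A + 16 * A * A * B * s))).
    + apply sumR_ext. intros k Hk.
      transitivity (sumR n (fun l => (8 * A * A * A * t k) * (t l * delta k l) + (16 * A * A * B * t k * t k) * (t l * t l))).
      * apply sumR_ext. intros; unfold t; cbv beta; ring.
      * rewrite sumR_plus, !sumR_scal, sumR_delta by auto. rewrite <- Hs. ring.
    + rewrite (sumR_ext n _ (fun k => (8 * A * A * A + 16 * A * A * B * s) * (t k * t k))) by (intros; ring).
      rewrite sumR_scal, <- Hs. ring.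
Qed.

End TF.

Definition incr (psi : nat -> nat) := forall j, (psi j < psi (S j))%nat.

Lemma incr_ge psi : incr psi -> forall j, (j <= psi j)%nat.
Proof. intros H j. induction j; [lia|]. pose proof (H j). lia. Qed.

Lemma incr_mono psi : incr psi -> forall i j, (i < j)%nat -> (psi i < psi j)%nat.
Proof. intros H i j Hij. induction Hij. apply H. pose proof (H m). lia. Qed.

Lemma incr_comp phi psi : incr phi -> incr psi -> incr (fun j => phi (psi j)).
Proof. intros H1 H2 j. apply incr_mono; auto. Qed.

Lemma cv_sub u l psi : Un_cv u l -> incr psi -> Un_cv (fun j => u (psi j)) l.
Proof.
  intros H Hp eps He. destruct (H eps He) as [N HN]. exists N. intros j Hj.
  apply HN. pose proof (incr_ge psi Hp j). lia.
Qed.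

Lemma small_inv eps : 0 < eps -> exists N, forall j, (N <= j)%nat -> / INR (S j) < eps.
Proof.
  intros He. destruct (INR_archimed eps 1 He) as [N HN]. exists N. intros j Hj.
  assert (INR N <= INR j) by (apply le_INR; auto). rewrite S_INR.
  assert (0 < INR N) by (destruct N; simpl in HN; [lra| pose proof (pos_INR N); rewrite S_INR; lra]).
  apply Rmult_lt_reg_r with (INR j + 1). lra. rewrite Rinv_l by lra. nra.
Qed.

Lemma BW1 (u : nat -> R) Mb : (forall j, Rabs (u j) <= Mb) ->
  exists psi l, incr psi /\ Un_cv (fun j => u (psi j)) l.
Proof.
  intros Hb.
  destruct (Bolzano_Weierstrass u (fun r => -Mb <= r <= Mb) (compact_P3 (-Mb) Mb)) as [l Hl].
  { intros j. specialize (Hb j). pose proof (Rle_abs (u j)). pose proof (Rle_abs (- u j)). rewrite Rabs_Ropp in H0. lra. }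
  assert (Hc : forall N j, exists p, (N <= p)%nat /\ Rabs (u p - l) < / INR (S j)).
  { intros N j. assert (Hpos : 0 < / INR (S j)) by (apply Rinv_0_lt_compat; apply lt_0_INR; lia).
    destruct (Hl (fun r => Rabs (r - l) < / INR (S j)) N) as [p Hp].
    - exists (mkposreal _ Hpos). intros r Hr. exact Hr.
    - exists p; auto. }
  set (sel := fun N j => proj1_sig (constructive_indefinite_description _ (Hc N j))).
  assert (Hsel : forall N j, (N <= sel N j)%nat /\ Rabs (u (sel N j) - l) < / INR (S j)).
  { intros. unfold sel. destruct (constructive_indefinite_description _ (Hc N j)). auto. }
  set (psi := fix psi j := match j with O => sel O O | S j' => sel (S (psi j')) (S j') end).
  exists psi, l. split.
  - intros j. simpl. destruct (Hsel (S (psi j)) (S j)). lia.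
  - intros eps He. destruct (small_inv eps He) as [N HN]. exists N. intros j Hj.
    unfold Rdist. apply Rle_lt_trans with (/ INR (S j)); [|apply HN; lia].
    destruct j as [|j]; [destruct (Hsel O O) as [_ Hh] | destruct (Hsel (S (psi j)) (S j)) as [_ Hh]]; left; exact Hh.
Qed.

Lemma BWn m Mb (xs : nat -> pt) : (forall j k, (k < m)%nat -> Rabs (xs j k) <= Mb) ->
  exists phi L, incr phi /\ forall k, (k < m)%nat -> Un_cv (fun j => xs (phi j) k) (L k).
Proof.
  induction m; intros Hb.
  - exists (fun j => j), (fun _ => 0). split. intros j; lia. intros; lia.
  - destruct IHm as [phi [L [Hi Hc]]]. { intros; apply Hb; lia. }
    destruct (BW1 (fun j => xs (phi j) m) Mb) as [psi [l [Hp Hl]]]. { intros; apply Hb; lia. }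
    exists (fun j => phi (psi j)), (fun k => if Nat.eq_dec k m then l else L k). split.
    + apply incr_comp; auto.
    + intros k Hk. destruct (Nat.eq_dec k m) as [->|Hne]. exact Hl.
      apply (cv_sub (fun j => xs (phi j) k)); auto. apply Hc; lia.
Qed.

Lemma sumR_const n r : sumR n (fun _ => r) = INR n * r.
Proof. induction n; simpl sumR; [simpl; ring|]. rewrite IHn, S_INR. ring. Qed.

Lemma cv_unif n (xs : nat -> pt) L : (forall k, (k < n)%nat -> Un_cv (fun j => xs j k) (L k)) ->
  forall e, 0 < e -> exists J, forall j, (J <= j)%nat -> forall k, (k < n)%nat -> Rabs (xs j k - L k) < e.
Proof.
  intros H e He.
  assert (forall m, (m <= n)%nat -> exists J, forall j, (J <= j)%nat -> forall k, (k < m)%nat -> Rabs (xs j k - L k) < e).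
  { induction m; intros Hm. exists O; intros; lia.
    destruct IHm as [J1 H1]; [lia|]. destruct (H m ltac:(lia) e He) as [J2 H2].
    exists (max J1 J2). intros j Hj k Hk. destruct (Nat.eq_dec k m) as [->|Hne].
    apply H2; lia. apply H1; lia. }
  apply H0; lia.
Qed.

Lemma cv_dist n (xs : nat -> pt) L : (forall k, (k < n)%nat -> Un_cv (fun j => xs j k) (L k)) ->
  forall e, 0 < e -> exists J, forall j, (J <= j)%nat -> dist n (xs j) L < e.
Proof.
  intros H e He. set (sn := sqrt (INR n)). assert (Hsn : 0 <= sn) by apply sqrt_pos.
  destruct (cv_unif n xs L H (e / (sn + 1))) as [J HJ]. apply Rdiv_lt_0_compat; lra.
  exists J. intros j Hj. specialize (HJ j Hj).
  set (e' := e / (sn + 1)) in *. assert (He' : 0 < e') by (apply Rdiv_lt_0_compat; lra).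
  assert (dist n (xs j) L <= sn * e').
  { unfold sn. rewrite <- (sqrt_square e') by lra. rewrite <- sqrt_mult by (try apply pos_INR; nra).
    unfold dist. apply sqrt_le_1_alt. rewrite <- sumR_const. apply sumR_le. intros k Hk. specialize (HJ k Hk).
    apply Rabs_def2 in HJ. simpl. nra. }
  assert (sn * e' < e). { unfold e'. apply Rmult_lt_reg_r with (sn + 1); [lra|].
    replace (sn * (e / (sn + 1)) * (sn + 1)) with (sn * e) by (field; lra). nra. }
  lra.
Qed.

Lemma min_attain (K : pt -> Prop) (F : pt -> R) n :
  (exists x, K x) -> (exists Mb, forall x, K x -> Mb <= F x) ->
  (forall xs : nat -> pt, (forall j, K (xs j)) -> exists phi L, incr phi /\ K L /\
      forall e, 0 < e -> exists J, forall j, (J <= j)%nat -> dist n (xs (phi j)) L < e) ->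
  (forall x, K x -> forall e, 0 < e -> exists d, 0 < d /\ forall z, K z -> dist n z x < d -> F x - e < F z) ->
  exists p, K p /\ forall x, K x -> F p <= F x.
Proof.
  intros [x0 Hx0] [Mb HM] Hcomp Hlsc.
  set (E := fun r => exists x, K x /\ r = - F x).
  destruct (completeness E) as [lam [Hub Hlub]].
  { exists (- Mb). intros r [x [Kx ->]]. specialize (HM x Kx). lra. }
  { exists (- F x0), x0. auto. }
  set (mu := - lam).
  assert (Hmu : forall x, K x -> mu <= F x). { intros x Kx. assert (E (- F x)) by (exists x; auto). specialize (Hub _ H). unfold mu; lra. }
  assert (Hex : forall j, exists x, K x /\ F x < mu + / INR (S j)).
  { intros j. assert (Hpos : 0 < / INR (S j)) by (apply Rinv_0_lt_compat; apply lt_0_INR; lia).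
    apply NNPP. intros Hn.
    assert (is_upper_bound E (lam - / INR (S j))).
    { intros r [x [Kx ->]]. apply Rnot_lt_le. intros Hlt. apply Hn. exists x. split; auto. unfold mu. lra. }
    specialize (Hlub _ H). lra. }
  set (xs := fun j => proj1_sig (constructive_indefinite_description _ (Hex j))).
  assert (Hxs : forall j, K (xs j) /\ F (xs j) < mu + / INR (S j)).
  { intros. unfold xs. destruct (constructive_indefinite_description _ (Hex j)). auto. }
  destruct (Hcomp xs (fun j => proj1 (Hxs j))) as [phi [L [Hphi [KL HL]]]].
  exists L. split; auto. intros x Kx. specialize (Hmu x Kx).
  apply Rle_trans with mu; auto. apply Rnot_lt_le. intros Hlt.
  set (e := (F L - mu) / 2). assert (He : 0 < e) by (unfold e; lra).
  destruct (Hlsc L KL e He) as [d [Hd Hd2]].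
  destruct (HL d Hd) as [J1 HJ1].
  destruct (small_inv e He) as [J2 HJ2].
  set (j := max J1 J2).
  specialize (Hd2 (xs (phi j)) (proj1 (Hxs _)) (HJ1 j ltac:(lia))).
  destruct (Hxs (phi j)) as [_ Hf].
  assert (/ INR (S (phi j)) < e). { apply HJ2. pose proof (incr_ge phi Hphi j). lia. }
  unfold e in *. lra.
Qed.

Lemma ball_seqcomp n y0 c (xs : nat -> pt) : (forall j, inRn n (xs j) /\ qf n y0 (xs j) <= c) ->
  exists phi L, incr phi /\ (inRn n L /\ qf n y0 L <= c) /\
    forall e, 0 < e -> exists J, forall j, (J <= j)%nat -> dist n (xs (phi j)) L < e.
Proof.
  intros Hx.
  set (Bnd := sumR n (fun k => Rabs (y0 k)) + sqrt c).
  destruct (BWn n Bnd xs) as [phi [L [Hphi HL]]].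
  { intros j k Hk. destruct (Hx j) as [_ Hq].
    pose proof (coord_le_dist n (xs j) y0 k Hk).
    assert (dist n (xs j) y0 <= sqrt c) by (rewrite qf_dist; apply sqrt_le_1_alt; auto).
    pose proof (sumR_term n (fun k => Rabs (y0 k)) k (fun k _ => Rabs_pos _) Hk). cbv beta in H1.
    pose proof (Rabs_triang (xs j k - y0 k) (y0 k)). replace (xs j k - y0 k + y0 k) with (xs j k) in H2 by ring.
    unfold Bnd. lra. }
  set (L' := fun k => if Compare_dec.lt_dec k n then L k else 0).
  assert (HL' : forall k, (k < n)%nat -> Un_cv (fun j => xs (phi j) k) (L' k)).
  { intros k Hk. unfold L'. destruct (Compare_dec.lt_dec k n); [auto|lia]. }
  pose proof (cv_dist n (fun j => xs (phi j)) L' HL') as Hd.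
  exists phi, L'. split; auto. split; auto. split.
  - intros k Hk. unfold L'. destruct (Compare_dec.lt_dec k n); [lia|auto].
  - apply Rnot_lt_le. intros Hlt.
    destruct (HG_cont n (qf n y0) _ L' (HG_q n y0 L') (qf n y0 L' - c) ltac:(lra)) as [d [Hd0 Hd1]].
    destruct (Hd d Hd0) as [J HJ].
    specialize (Hd1 (xs (phi J)) (proj1 (Hx _)) (HJ J ltac:(lia))).
    destruct (Hx (phi J)) as [_ Hq]. apply Rabs_def2 in Hd1. lra.
Qed.

Lemma ball_min n y0 c (F : pt -> R) :
  0 <= c -> inRn n y0 ->
  (exists Mb, forall x, inRn n x /\ qf n y0 x <= c -> Mb <= F x) ->
  (forall x, inRn n x /\ qf n y0 x <= c -> forall e, 0 < e -> exists d, 0 < d /\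
     forall z, inRn n z /\ qf n y0 z <= c -> dist n z x < d -> F x - e < F z) ->
  exists p, (inRn n p /\ qf n y0 p <= c) /\ forall x, inRn n x /\ qf n y0 x <= c -> F p <= F x.
Proof.
  intros Hc Hy HM Hl. apply (min_attain _ F n); auto.
  - exists y0. split; auto. unfold qf. rewrite (sumR_ext _ _ (fun _ => 0)). rewrite sumR_zero. auto.
    intros; cbv beta; ring.
  - intros xs Hxs. apply ball_seqcomp. auto.
Qed.

Lemma zero_C2 n O : C2_on n O (fun _ => 0) (fun _ _ => 0) (fun _ _ _ => 0).
Proof.
  split; [|split].
  - intros x _. apply HG_const.
  - intros k _ x _. apply HG_const.
  - intros k l _ _ x _ eps He. exists 1. split; [lra|]. intros. rewrite Rminus_0_r, Rabs_R0. auto.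
Qed.

Lemma step1 n U ui uj m : (1 <= n)%nat -> super_component n U ui uj ->
  (forall z, U z -> m <= ui z) -> forall x, U x -> ui x = m -> uj x <= m.
Proof.
  intros Hn Hs Hmin x Ux Hx.
  assert (Hq : forall v, quad n (fun _ _ => 0) v = 0).
  { intros v. unfold quad. transitivity (sumR n (fun _ => 0)); [|apply sumR_zero].
    apply sumR_ext. intros k _. transitivity (sumR n (fun _ => 0)); [|apply sumR_zero].
    apply sumR_ext. intros; ring. }
  pose proof (Hs _ _ _ (zero_C2 n U) x Ux) as H.
  assert (Hlm : local_min_on n U (fun z => ui z - 0) x).
  { exists 1. split; [lra|]. intros z Uz _. rewrite Hx. specialize (Hmin z Uz). lra. }
  specialize (H Hlm 0).
  assert (inf_lap_minus n (fun _ => 0) (fun _ _ => 0) 0).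
  { right. split. apply dot_zero_l. split.
    - exists (fun k => delta 0 k). split; [split|].
      + intros k Hk. unfold delta. destruct (Nat.eq_dec 0 k); [lia|auto].
      + unfold dot. rewrite sumR_delta by lia. unfold delta. destruct (Nat.eq_dec 0 0); [auto|lia].
      + apply Hq.
    - intros v _. rewrite Hq. lra. }
  specialize (H H0). lra.
Qed.

Lemma Rmin_lsc a b a' b' e : a - e < a' -> b - e < b' -> Rmin a b - e < Rmin a' b'.
Proof. intros. unfold Rmin. destruct (Rle_dec a b), (Rle_dec a' b'); lra. Qed.

Lemma pow_le_c t c N : 0 <= t -> t <= c -> t ^ N <= c ^ N.
Proof. intros. apply pow_incr; auto. Qed.

Lemma mprime_pos a M c s : 0 < a -> 0 < c - s -> c < (2 * INR M + 3) * s ->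
  0 < 2 * Gf c (a1 a M) (S M) s + 4 * Gf c (a2 a M) M s * s.
Proof.
  intros Ha Hcs Hg. unfold Gf, a2, a1. rewrite !S_INR. rewrite <- tech_pow_Rmult.
  pose proof (pow_lt _ M Hcs). set (t := (c - s)^M) in *. pose proof (pos_INR M).
  replace (2 * (- (a * (INR M + 1 + 1)) * ((c - s) * t)) + 4 * (- (- (a * (INR M + 1 + 1)) * (INR M + 1)) * t) * s)
    with (2 * a * (INR M + 2) * t * ((2 * INR M + 3) * s - c)) by ring.
  apply Rmult_lt_0_compat; [|lra]. apply Rmult_lt_0_compat; [|auto]. apply Rmult_lt_0_compat; lra.
Qed.

Lemma A_nonzero a M c s : 0 < a -> 0 < c - s -> Gf c (a1 a M) (S M) s <> 0.
Proof.
  intros Ha Hcs. unfold Gf, a1. pose proof (pow_lt _ (S M) Hcs). pose proof (pos_INR (S (S M))).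
  rewrite S_INR in *. apply Rmult_integral_contrapositive. split; [|intro; lra].
  pose proof (pos_INR (S M)). assert (0 < a * (INR (S M) + 1)) by (apply Rmult_lt_0_compat; lra). intro; lra.
Qed.

Lemma Zopen n U u1 u2 m :
  (1 <= n)%nat -> is_open n U -> lsc_on n U u1 -> lsc_on n U u2 ->
  super_component n U u1 u2 -> super_component n U u2 u1 ->
  (forall x, U x -> m <= u1 x /\ m <= u2 x) ->
  forall x0, U x0 -> u1 x0 = m -> u2 x0 = m ->
  exists r, 0 < r /\ forall y, U y -> dist n y x0 < r -> (u1 y = m \/ u2 y = m).
Proof.
  intros Hn [HUin HUo] Hl1 Hl2 S12 S21 Hm x0 Ux0 H10 H20.
  destruct (HUo x0 Ux0) as [r0 [Hr0 Hball]].
  set (rho := r0 / 4). assert (Hrho : 0 < rho) by (unfold rho; lra).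
  exists rho. split; auto. intros y Uy Hdy.
  apply NNPP. intros Hne.
  assert (Hu1 : m < u1 y) by (destruct (Hm y Uy); destruct (Req_dec (u1 y) m); [tauto|lra]).
  assert (Hu2 : m < u2 y) by (destruct (Hm y Uy); destruct (Req_dec (u2 y) m); [tauto|lra]).
  set (del := Rmin (u1 y) (u2 y) - m).
  assert (Hdel : 0 < del) by (unfold del; pose proof (Rmin_glb_lt _ _ _ Hu1 Hu2); lra).
  destruct (Hl1 y Uy (del/2) ltac:(lra)) as [d1 [Hd1 Hd1']].
  destruct (Hl2 y Uy (del/2) ltac:(lra)) as [d2 [Hd2 Hd2']].
  set (r1 := Rmin (Rmin d1 d2) rho).
  assert (Hr1 : 0 < r1) by (unfold r1; repeat apply Rmin_pos; auto).
  assert (Hr1r : r1 <= rho) by apply Rmin_r.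
  assert (Hbig : forall z, U z -> dist n z y < r1 -> m + del/2 < Rmin (u1 z) (u2 z)).
  { intros z Uz Hz. pose proof (Rmin_l (Rmin d1 d2) rho). pose proof (Rmin_l d1 d2). pose proof (Rmin_r d1 d2).
    fold r1 in H. specialize (Hd1' z Uz ltac:(lra)). specialize (Hd2' z Uz ltac:(lra)).
    pose proof (Rmin_l (u1 y) (u2 y)). pose proof (Rmin_r (u1 y) (u2 y)).
    apply Rmin_glb_lt; unfold del in *; lra. }
  set (c := 2 * rho * (2 * rho)).
  assert (Hc : 0 < c) by (unfold c; nra).
  assert (Hsc : sqrt c = 2 * rho) by (unfold c; apply sqrt_square; lra).
  destruct (INR_archimed (r1 * r1) c ltac:(nra)) as [M HM].
  assert (Hgood : forall s, r1 * r1 <= s -> c < (2 * INR M + 3) * s).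
  { intros s Hs. pose proof (pos_INR M). nra. }
  set (N2 := S (S M)).
  set (a := del / (2 * (c ^ N2 + 1))).
  assert (HcN : 0 < c ^ N2) by (apply pow_lt; auto).
  assert (Ha : 0 < a) by (unfold a; apply Rdiv_lt_0_compat; lra).
  assert (Hac : a * c ^ N2 < del / 2).
  { unfold a. apply Rmult_lt_reg_r with (2 * (c ^ N2 + 1)); [lra|].
    replace (del / (2 * (c ^ N2 + 1)) * c ^ N2 * (2 * (c ^ N2 + 1))) with (del * c ^ N2) by (field; lra). nra. }
  set (ph := phi n y c a M).
  assert (Hph : forall x, ph x = a * (c - qf n y x) ^ N2) by reflexivity.
  set (K := fun x => inRn n x /\ qf n y x <= c).
  assert (HKU : forall x, K x -> U x).
  { intros x [Hx Hq]. apply Hball; auto.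
    pose proof (dist_tri n x y x0).
    assert (dist n x y <= 2 * rho) by (rewrite <- Hsc, qf_dist; apply sqrt_le_1_alt; auto).
    unfold rho in *; lra. }
  assert (Hphb : forall x, K x -> 0 <= ph x <= a * c ^ N2).
  { intros x [Hx Hq]. rewrite Hph. pose proof (qf_nonneg n y x).
    pose proof (pow_le_c (c - qf n y x) c N2 ltac:(lra) ltac:(lra)).
    pose proof (pow_le (c - qf n y x) N2 ltac:(lra)). split; nra. }
  set (F := fun x => Rmin (u1 x) (u2 x) - ph x).
  assert (HGph : forall x, HGp n ph (fun k => Gf c (- (a * INR N2)) (pred N2) (qf n y x) * (2 * (x k - y k))) x).
  { intros x. apply (HG_comp n (Gf c a N2) _ (qf n y) _ x). apply dGf. apply HG_q. }
  destruct (ball_min n y c F) as [p [Kp Hpmin]].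
  { lra. }
  { apply HUin; auto. }
  { exists (m - del / 2). intros x Kx. unfold F. destruct (Hm x (HKU x Kx)).
    pose proof (Rmin_glb _ _ _ H H0). pose proof (Hphb x Kx). lra. }
  { intros x Kx e He. pose proof (HKU x Kx) as Ux.
    destruct (Hl1 x Ux (e/2) ltac:(lra)) as [e1 [He1 He1']].
    destruct (Hl2 x Ux (e/2) ltac:(lra)) as [e2 [He2 He2']].
    destruct (HG_cont n ph _ x (HGph x) (e/2) ltac:(lra)) as [e3 [He3 He3']].
    exists (Rmin (Rmin e1 e2) e3). split. { repeat apply Rmin_pos; auto. }
    intros z Kz Hz. pose proof (HKU z Kz) as Uz.
    pose proof (Rmin_l (Rmin e1 e2) e3). pose proof (Rmin_r (Rmin e1 e2) e3). pose proof (Rmin_l e1 e2). pose proof (Rmin_r e1 e2).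
    specialize (He1' z Uz ltac:(lra)). specialize (He2' z Uz ltac:(lra)). specialize (He3' z (proj1 Kz) ltac:(lra)).
    pose proof (Rmin_lsc _ _ _ _ _ He1' He2'). apply Rabs_def2 in He3'. unfold F. lra. }
  assert (Kx0 : K x0).
  { split. apply HUin; auto. rewrite qf_sq, dist_sym. pose proof (dist_nonneg n y x0). unfold c. nra. }
  assert (HFx0 : F x0 < m).
  { unfold F. rewrite H10, H20. unfold Rmin. destruct (Rle_dec m m); [|lra].
    rewrite Hph. assert (qf n y x0 < c).
    { rewrite qf_sq, dist_sym. pose proof (dist_nonneg n y x0). unfold c. nra. }
    pose proof (pow_lt (c - qf n y x0) N2 ltac:(lra)). nra. }
  pose proof (Hpmin x0 Kx0) as HFp.
  pose proof (HKU p Kp) as Up.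
  destruct (Hm p Up) as [Hm1 Hm2].
  assert (Hqlt : qf n y p < c).
  { destruct Kp as [_ Hq]. destruct Hq as [Hq|Hq]; auto. exfalso.
    assert (ph p = 0) by (rewrite Hph, Hq; unfold N2; simpl; ring).
    assert (F p = Rmin (u1 p) (u2 p) - ph p) by reflexivity. pose proof (Rmin_glb _ _ _ Hm1 Hm2). lra. }
  assert (Hqge : r1 * r1 <= qf n y p).
  { apply Rnot_lt_le. intros Hlt. assert (dist n p y < r1).
    { rewrite qf_dist. rewrite <- (sqrt_square r1) by lra. apply sqrt_lt_1; auto. apply qf_nonneg. nra. }
    specialize (Hbig p Up H). pose proof (Hphb p Kp). assert (F p = Rmin (u1 p) (u2 p) - ph p) by reflexivity. lra. }
  set (s := qf n y p) in *.
  assert (Hspos : 0 < s) by nra.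
  set (mp := 2 * Gf c (a1 a M) (S M) s + 4 * Gf c (a2 a M) M s * s).
  assert (Hmp : 0 < mp) by (apply mprime_pos; auto; lra).
  assert (Hinf : inf_lap_minus n (Dphi n y c a M p) (D2phi n y c a M p) mp).
  { left. destruct (lap_calc n y c a M p) as [E1 E2]. fold s in E1, E2.
    pose proof (A_nonzero a M c s Ha ltac:(lra)).
    set (A := Gf c (a1 a M) (S M) s) in *.
    assert (4 * A * A * s <> 0).
    { assert (0 < A * A) by (apply Rsqr_pos_lt; auto). intro; nra. }
    rewrite E1, E2. split; auto. unfold mp. fold A. field. split; auto; intro; lra. }
  assert (Hdp : dist n p y < sqrt c).
  { rewrite qf_dist. apply sqrt_lt_1; auto. apply qf_nonneg. lra. }
  assert (Hlm : forall ui, (forall z, Rmin (u1 z) (u2 z) <= ui z) -> ui p = Rmin (u1 p) (u2 p) ->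
     local_min_on n U (fun z => ui z - ph z) p).
  { intros ui Hui Hup. exists (sqrt c - dist n p y). split; [lra|].
    intros z Uz Hz. assert (Kz : K z).
    { split. apply HUin; auto. pose proof (dist_tri n z p y).
      assert (dist n z y < sqrt c) by lra. pose proof (dist_nonneg n z y).
      rewrite qf_sq. pose proof (sqrt_sqrt c ltac:(lra)). nra. }
    specialize (Hpmin z Kz). unfold F in Hpmin. specialize (Hui z). cbv beta. lra. }
  destruct (Rle_dec (u1 p) (u2 p)) as [Hle|Hgt].
  - assert (Hmin : Rmin (u1 p) (u2 p) = u1 p) by (apply Rmin_left; auto).
    pose proof (S12 ph _ _ (phi_C2 n y c a M U HUin) p Up (Hlm u1 (fun z => Rmin_l _ _) (eq_sym Hmin)) mp Hinf).
    lra.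
  - assert (Hmin : Rmin (u1 p) (u2 p) = u2 p) by (apply Rmin_right; lra).
    pose proof (S21 ph _ _ (phi_C2 n y c a M U HUin) p Up (Hlm u2 (fun z => Rmin_r _ _) (eq_sym Hmin)) mp Hinf).
    lra.
Qed.

Lemma core n U u1 u2 m xs :
  (1 <= n)%nat -> is_open n U -> connected n U -> visc_supersolution n U u1 u2 ->
  (forall x, U x -> m <= u1 x /\ m <= u2 x) -> U xs -> (u1 xs = m \/ u2 xs = m) ->
  exists C, forall x, U x -> u1 x = C /\ u2 x = C.
Proof.
  intros Hn Ho Hconn [Hl1 [Hl2 [S12 S21]]] Hm Uxs Hxs.
  set (Z := fun x => U x /\ u1 x = m /\ u2 x = m).
  assert (Cl1 : forall x, U x -> (u1 x = m \/ u2 x = m) -> Z x).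
  { intros x Ux [H1|H2].
    - pose proof (step1 n U u1 u2 m Hn S12 (fun z Uz => proj1 (Hm z Uz)) x Ux H1). destruct (Hm x Ux).
      split; auto. split; auto. lra.
    - pose proof (step1 n U u2 u1 m Hn S21 (fun z Uz => proj2 (Hm z Uz)) x Ux H2). destruct (Hm x Ux).
      split; auto. split; auto. lra. }
  assert (Hall : forall x, U x -> Z x).
  { intros x Ux. apply NNPP. intros Hnz. apply Hconn.
    exists Z, (fun x => U x /\ ~ Z x). split; [|split; [|split; [|split; [|split]]]].
    - split. intros z [Uz _]; auto.
      intros z [Uz [H1 H2]].
      destruct (Zopen n U u1 u2 m Hn Ho Hl1 Hl2 S12 S21 Hm z Uz H1 H2) as [r [Hr Hr']].
      exists r. split; [auto|]. intros w Uw Hw. apply Cl1; auto.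
    - split. intros z [Uz _]; auto.
      intros z [Uz Hz].
      assert (Hu1 : m < u1 z) by (destruct (Hm z Uz); destruct (Req_dec (u1 z) m); [exfalso; apply Hz, Cl1; auto|lra]).
      assert (Hu2 : m < u2 z) by (destruct (Hm z Uz); destruct (Req_dec (u2 z) m); [exfalso; apply Hz, Cl1; auto|lra]).
      destruct (Hl1 z Uz (u1 z - m) ltac:(lra)) as [d1 [Hd1 Hd1']].
      exists d1. split; [auto|]. intros w Uw Hw. split; [auto|]. intros [_ [Hw1 _]].
      specialize (Hd1' w Uw Hw). lra.
    - intros z [Hz1 [_ Hz2]]. auto.
    - intros z Uz. destruct (classic (Z z)); auto.
    - exists xs. apply Cl1; auto.
    - exists x. auto. }
  exists m. intros x Ux. destruct (Hall x Ux) as [_ [H1 H2]]. auto.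
Qed.

Theorem mainTheorem2 (n : nat) (U : pt -> Prop) (u1 u2 : pt -> R) :
  (1 <= n)%nat ->
  is_open n U -> bounded_set n U -> connected n U ->
  visc_supersolution n U u1 u2 ->
  (exists xs, U xs /\
     ((forall x, U x -> u1 xs <= u1 x /\ u1 xs <= u2 x) \/
      (forall x, U x -> u2 xs <= u1 x /\ u2 xs <= u2 x))) ->
  exists C, forall x, U x -> u1 x = C /\ u2 x = C.
Proof.
  intros Hn Ho _ Hc Hv [xs [Uxs [H|H]]].
  - apply (core n U u1 u2 (u1 xs) xs); auto.
  - apply (core n U u1 u2 (u2 xs) xs); auto.
Qed.
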